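(* For a prime $p$ let $F_{pt}:\mathbb{F}_p^2\to\mathbb{F}_p^2$ be the map $F_{pt}(x,y)=(x^3y(x-y),\;xy^3(x-y))$, where $\mathbb{F}_p=\mathbb{Z}/p\mathbb{Z}$. Then: (1) if $p=2^k+1$ for some integer $k\ge 0$, the $(k+1)$-st iterate $F_{pt}^{\circ(k+1)}$ sends every point of $\mathbb{F}_p^2$ to $(0,0)$; (2) for an arbitrary prime $p$, there exists $N\ge1$ such that $F_{pt}^{\circ N}(x,y)=(0,0)$ for every pair $(x,y)\in\mathbb{F}_p^2$ such that either $x=0$, or $y=0$, or $x\neq0$ and $y/x$ has order a power of $2$ in the group $(\mathbb{Z}/p\mathbb{Z})^*$.
   Context: $F_{pt}$ is the reduction modulo $p$ of the integer polynomial map $(x,y)\mapsto(x^3y(x-y),\,xy^3(x-y))$ (called the ''power trap''); $F_{pt}^{\circ n}$ denotes its $n$-fold composition with itself. *)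

(* Defs.v *)
From HB Require Import structures.
From mathcomp Require Import all_boot all_order all_algebra all_fingroup.
Set Implicit Arguments. Unset Strict Implicit. Unset Printing Implicit Defensive.
Import GRing.Theory.
Local Open Scope ring_scope.

Definition Fpt (p : nat) (xy : 'F_p * 'F_p) : 'F_p * 'F_p :=
  let: (x, y) := xy in (x ^+ 3 * y * (x - y), x * y ^+ 3 * (x - y)).

Definition Fpt_iter (p n : nat) (xy : 'F_p * 'F_p) : 'F_p * 'F_p :=
  iter n (Fpt (p:=p)) xy.

(* Main.v *)
Require Import Defs.
From mathcomp Require Import all_boot all_order all_algebra all_fingroup.
From mathcomp Require Import ring finfield.
Local Open Scope ring_scope.
Import GRing.Theory.

Lemma Fpt_iter0 (p m : nat) : Fpt_iter (p:=p) m (0, 0) = (0, 0).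
Proof.
rewrite /Fpt_iter; elim: m => [|m IH] //=; rewrite IH /Fpt.
by rewrite !(mul0r, mulr0, expr0n).
Qed.

Lemma Fpt_mono (p m n : nat) (xy : 'F_p * 'F_p) : (m <= n)%N ->
  Fpt_iter m xy = (0, 0) -> Fpt_iter n xy = (0, 0).
Proof.
move=> mn; rewrite /Fpt_iter -(subnK mn) iterD => ->.
exact: Fpt_iter0.
Qed.

Lemma key (p : nat) (j : nat) : forall x y : 'F_p,
  (x = 0 \/ y = 0 \/ (x != 0 /\ (y / x) ^+ (2 ^ j) = 1)) ->
  Fpt_iter j.+1 (x, y) = (0, 0).
Proof.
elim: j => [|j IH] x y H.
  rewrite /Fpt_iter /= /Fpt.
  case: H => [->|[->|[xn0 e]]].
  - by rewrite !(mul0r, mulr0, expr0n).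
  - by rewrite !(mul0r, mulr0, expr0n).
  - rewrite expr1 in e.
    have -> : y = x by apply: (mulIf (invr_neq0 xn0)); rewrite e mulfV.
    by rewrite subrr !mulr0.
rewrite /Fpt_iter iterSr -/(Fpt_iter _ _) /=; apply: IH.
case: H => [->|[->|[xn0 e]]].
- by left; rewrite !(mul0r, mulr0, expr0n).
- by left; rewrite !(mul0r, mulr0, expr0n).
set x' := x ^+ 3 * y * (x - y).
have [->|x'n0] := eqVneq x' 0; first by left.
right; right; split => //.
have -> : x * y ^+ 3 * (x - y) / x' = (y / x) ^+ 2.
  apply: (mulIf x'n0); rewrite mulfVK //.
  rewrite /x' expr_div_n; apply: (mulIf (expf_neq0 2 xn0)).
  rewrite [_ / _ * _]mulrAC divfK ?expf_neq0 //.
  by rewrite !exprS expr0 !mulr1; ring.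
by rewrite -exprM -expnS.
Qed.

Theorem mainTheorem3 (p : nat) (hp : prime p) :
  (forall k : nat, p = (2 ^ k).+1 ->
     forall xy : 'F_p * 'F_p, Fpt_iter (k.+1) xy = (0, 0)) /\
  (exists N : nat, (1 <= N)%N /\
     forall x y : 'F_p,
       (x = 0 \/ y = 0 \/
        (x != 0 /\ exists (u : {unit 'F_p}) (j : nat),
            val u = y / x /\ #[u]%g = (2 ^ j)%N)) ->
       Fpt_iter N (x, y) = (0, 0)).
Proof.
split.
  move=> k pk [x y]; apply: key.
  have [->|xn0] := eqVneq x 0; first by left.
  have [->|yn0] := eqVneq y 0; first by right; left.
  right; right; split => //.
  have tn0 : y / x != 0 by rewrite mulf_neq0 ?invr_neq0.
  have : (y / x) ^+ (2 ^ k).+1 = y / x.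
    by rewrite -pk -[X in _ ^+ X = _](card_Fp hp) expf_card.
  rewrite exprS.
  by move/(canRL (mulKf tn0)); rewrite mulVf.
exists p; split; first exact: prime_gt0.
move=> x y H.
have [j Hj] : exists j, (j < p)%N /\
   (x = 0 \/ y = 0 \/ (x != 0 /\ (y / x) ^+ (2 ^ j) = 1)).
  case: H => [H|[H|[xn0 [u [j [hu ho]]]]]].
  - by exists 0%N; split; [exact: prime_gt0| left].
  - by exists 0%N; split; [exact: prime_gt0| right; left].
  exists j; split.
    apply: (leq_trans (ltn_expl j (ltnSn 1))).
    rewrite -ho; apply: (leq_trans (max_card _)).
    by rewrite -[X in (_ <= X)%N](card_Fp hp); apply: leq_card; exact: val_inj.
  right; right; split => //.
  by rewrite -hu -ho -FinRing.val_unitX expg_order.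
case: Hj => jp Hj.
apply: (@Fpt_mono p j.+1 p (x, y) jp).
exact: (@key p j x y Hj).
Qed.
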